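(* Let $\rho_m>0$, $f(\rho)=\rho_m-\rho$, and let $\bar\rho$ satisfy $\frac{\rho_m}{2}<\bar\rho<\rho_m$. Then the linear system on $\mathbb{R}^2\times\mathbb{R}$ \[ \begin{cases} \partial_t\psi-(f(\bar\rho)-2\bar\rho)\partial_x\psi-\bar\rho f^2(\bar\rho)\Delta\varphi=0,\\ \partial_t\varphi-f(\bar\rho)\partial_x\varphi+\frac{1}{f(\bar\rho)}\psi=0 \end{cases} \] admits planar wave solutions of the form \[ \psi=A\cos(ax+by+ct),\qquad \varphi=B\sin(ax+by+ct), \] where $a,b,c\in\mathbb{R}$ and $A,B\in\mathbb{R}$ with $AB\neq0$.
   Context: $\Delta$ is the Laplacian in $(x,y)$. This is the linearization (without viscosity) of the generalized Hughes mean-field game system with $\beta=2$ around the constant state $(\bar\rho, x/f(\bar\rho))$. *)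

(* Defs.v *)
From Stdlib Require Import Reals.
From Coquelicot Require Import Coquelicot.
Open Scope R_scope.

Definition dx (u : R -> R -> R -> R) x y t := Derive (fun s => u s y t) x.
Definition dy (u : R -> R -> R -> R) x y t := Derive (fun s => u x s t) y.
Definition dt (u : R -> R -> R -> R) x y t := Derive (fun s => u x y s) t.
Definition lap (u : R -> R -> R -> R) x y t :=
  Derive (fun s => dx u s y t) x + Derive (fun s => dy u x s t) y.

Definition f (rho_m rho : R) : R := rho_m - rho.

Definition is_solution (rho_m rhob : R) (psi phi : R -> R -> R -> R) : Prop :=
  forall x y t,
    ex_derive (fun s => psi x y s) t /\ ex_derive (fun s => psi s y t) x /\
    ex_derive (fun s => phi x y s) t /\ ex_derive (fun s => phi s y t) x /\
    ex_derive (fun s => phi x s t) y /\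
    ex_derive (fun s => dx phi s y t) x /\ ex_derive (fun s => dy phi x s t) y /\
    dt psi x y t - (f rho_m rhob - 2 * rhob) * dx psi x y t
      - rhob * (f rho_m rhob) ^ 2 * lap phi x y t = 0 /\
    dt phi x y t - f rho_m rhob * dx phi x y t + / f rho_m rhob * psi x y t = 0.

(* Main.v *)
Require Import Defs.
From Stdlib Require Import Reals Lra.
From Coquelicot Require Import Coquelicot.
Open Scope R_scope.

Section S.
Variables (A a b c x y t : R).
Lemma Dcx : Derive (fun s => A * cos (a * s + b * y + c * t)) x = - A * a * sin (a * x + b * y + c * t).
Proof. apply is_derive_unique. auto_derive; [easy| ring]. Qed.
Lemma Dct : Derive (fun s => A * cos (a * x + b * y + c * s)) t = - A * c * sin (a * x + b * y + c * t).
Proof. apply is_derive_unique. auto_derive; [easy| ring]. Qed.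
Lemma Dsx : Derive (fun s => A * sin (a * s + b * y + c * t)) x = A * a * cos (a * x + b * y + c * t).
Proof. apply is_derive_unique. auto_derive; [easy| ring]. Qed.
Lemma Dsy : Derive (fun s => A * sin (a * x + b * s + c * t)) y = A * b * cos (a * x + b * y + c * t).
Proof. apply is_derive_unique. auto_derive; [easy| ring]. Qed.
Lemma Dst : Derive (fun s => A * sin (a * x + b * y + c * s)) t = A * c * cos (a * x + b * y + c * t).
Proof. apply is_derive_unique. auto_derive; [easy| ring]. Qed.
Lemma Dccx : Derive (fun s => A * a * cos (a * s + b * y + c * t)) x = - A * a * a * sin (a * x + b * y + c * t).
Proof. apply is_derive_unique. auto_derive; [easy| ring]. Qed.
Lemma Dccy : Derive (fun s => A * b * cos (a * x + b * s + c * t)) y = - A * b * b * sin (a * x + b * y + c * t).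
Proof. apply is_derive_unique. auto_derive; [easy| ring]. Qed.
End S.

Theorem lemma1 (rho_m rhob : R) :
  0 < rho_m -> rho_m / 2 < rhob -> rhob < rho_m ->
  exists a b c A B : R, A * B <> 0 /\
    is_solution rho_m rhob
      (fun x y t => A * cos (a * x + b * y + c * t))
      (fun x y t => B * sin (a * x + b * y + c * t)).
Proof.
  intros H0 H1 H2.
  pose (Fv := rho_m - rhob).
  pose (sq := sqrt (rhob * (2 * rhob - rho_m))).
  assert (hs0 : 0 <= sq) by apply sqrt_pos.
  assert (hs : sq * sq = rhob * (2 * rhob - rho_m)) by (apply sqrt_sqrt; nra).
  assert (hF : 0 < Fv) by (unfold Fv; lra).
  exists 1, 0, (Fv - rhob - sq), (Fv * (rhob + sq)), 1.
  split. { apply Rmult_integral_contrapositive; split; try lra. nra. }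
  intros x y t.
  unfold lap; unfold dx, dy, dt, Defs.f; cbv beta; fold Fv.
  rewrite (Derive_ext (fun s0 => Derive (fun s1 => 1 * sin (1 * s1 + 0 * y + (Fv - rhob - sq) * t)) s0) (fun s0 => 1 * 1 * cos (1 * s0 + 0 * y + (Fv - rhob - sq) * t)))
    by (intros; apply Dsx).
  rewrite (Derive_ext (fun s0 => Derive (fun s1 => 1 * sin (1 * x + 0 * s1 + (Fv - rhob - sq) * t)) s0) (fun s0 => 1 * 0 * cos (1 * x + 0 * s0 + (Fv - rhob - sq) * t)))
    by (intros; apply Dsy).
  rewrite Dcx, Dct, Dst, Dsx, Dccx, Dccy.
  repeat split; try (auto_derive; easy).
  - apply (ex_derive_ext (fun s0 => 1 * 1 * cos (1 * s0 + 0 * y + (Fv - rhob - sq) * t))).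
    intros; symmetry; apply Dsx. auto_derive; easy.
  - apply (ex_derive_ext (fun s0 => 1 * 0 * cos (1 * x + 0 * s0 + (Fv - rhob - sq) * t))).
    intros; symmetry; apply Dsy. auto_derive; easy.
  - pose (S := sin (1 * x + 0 * y + (Fv - rhob - sq) * t)). fold S.
    transitivity (S * Fv * (sq * sq - rhob * (2 * rhob - rho_m))).
    unfold Fv; ring. rewrite hs; ring.
  - field. lra.
Qed.
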